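(* Let $A$ be a finite alphabet, $E\subseteq W(A)$ and $\vec s=(s_n(x))_{n=0}^\infty\in V^\infty(A)$ such that $E$ is large in $\vec s$. Then there exist $m\in\mathbb N$ and $w(x)\in\langle (s_n(x))_{n=0}^m\rangle_v$ such that $\{w(a):a\in A\}\subseteq E$.
   Context: $\mathbb N=\{0,1,2,\dots\}$. Let $A$ be a finite nonempty alphabet. $W(A)$ denotes the set of all finite words over $A$, including the empty word; words are concatenated by juxtaposition. Fix a symbol $x\notin A$. A variable word over $A$ is a finite word over $A\cup\{x\}$ in which $x$ occurs at least once; $V(A)$ is the set of variable words. For $s(x)\in V(A)$ and $a\in A\cup\{x\}$, $s(a)$ is obtained by replacing every occurrence of $x$ by $a$. $V^\infty(A)$ is the set of infinite sequences of variable words. For a sequence $(s_n(x))_{n\in I}$ of variable words indexed by a set $I\subseteq\mathbb N$ that is either a finite interval or of the form $\{m,m+1,\dots\}$: the constant span $\langle (s_n(x))_{n\in I}\rangle_c$ is the set of all words $s_{l_0}(a_0)s_{l_1}(a_1)\cdots s_{l_j}(a_j)$ with $j\ge 0$, $l_0<\dots<l_j$ in $I$ and $a_0,\dots,a_j\in A$; the variable span $\langle (s_n(x))_{n\in I}\rangle_v$ is the set of all words $s_{l_0}(a_0)\cdots s_{l_j}(a_j)$ with $j\ge0$, $l_0<\dots<l_j$ in $I$, $a_0,\dots,a_j\in A\cup\{x\}$ and at least one $a_i=x$. Extracted subsequences: let $\vec s=(s_n(x))_{n=0}^\infty\in V^\infty(A)$. A finite sequence $(t_n(x))_{n=0}^l$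 of variable words is an extracted subsequence of $\vec s$ if there exist integers $0=m_0<m_1<\dots<m_{l+1}$ with $t_i(x)\in\langle (s_n(x))_{n=m_i}^{m_{i+1}-1}\rangle_v$ for all $0\le i\le l$. An infinite sequence $\vec t=(t_n(x))_{n=0}^\infty$ is an extracted subsequence of $\vec s$ if every initial segment $(t_n(x))_{n=0}^l$ is a finite extracted subsequence of $\vec s$. We write $\vec t\le\vec s$. A set $E\subseteq W(A)$ is large in $\vec s\in V^\infty(A)$ if $E\cap\langle\vec w\rangle_c\neq\emptyset$ for every infinite extracted subsequence $\vec w$ of $\vec s$. *)

(* Defs.v *)
From mathcomp Require Import all_boot.
Set Implicit Arguments. Unset Strict Implicit. Unset Printing Implicit Defensive.

(* Letters of A ∪ {x}: [Some a] is the letter a, [None] is the variable x.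
   Words over A are [seq A]; variable words are [seq (option A)] containing [None]. *)

Definition is_vword (A : eqType) (s : seq (option A)) : bool := None \in s.

Definition csub (A : Type) (s : seq (option A)) (a : A) : seq A :=
  map (fun c => if c is Some b then b else a) s.

Definition vsub (A : Type) (s : seq (option A)) (c : option A) : seq (option A) :=
  map (fun d => if d is Some b then Some b else c) s.

Definition cspan (A : Type) (s : nat -> seq (option A)) (I : nat -> bool)
  (w : seq A) : Prop :=
  exists (l : seq nat) (a : seq A),
    [/\ l != [::], size a = size l, sorted ltn l, all I l &
        w = flatten [seq csub (s p.1) p.2 | p <- zip l a]].

Definition vspan (A : eqType) (s : nat -> seq (option A)) (I : nat -> bool)
  (w : seq (option A)) : Prop :=
  exists (l : seq nat) (a : seq (option A)),
    [/\ l != [::], size a = size l, sorted ltn l, all I l &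
        None \in a] /\
        w = flatten [seq vsub (s p.1) p.2 | p <- zip l a].

Definition extracted_fin (A : eqType) (s : nat -> seq (option A))
  (t : nat -> seq (option A)) (l : nat) : Prop :=
  exists m : nat -> nat,
    [/\ m 0 = 0,
        (forall i, i <= l -> m i < m i.+1) &
        (forall i, i <= l -> vspan s (fun n => (m i <= n) && (n < m i.+1)) (t i))].

Definition extracted (A : eqType) (s t : nat -> seq (option A)) : Prop :=
  forall l, extracted_fin s t l.

Definition large (A : eqType) (E : seq A -> Prop) (s : nat -> seq (option A)) : Prop :=
  forall w, extracted s w -> exists u, E u /\ cspan w (fun _ => true) u.

(* Main.v *)
Require Import Defs.
From mathcomp Require Import all_boot.
From mathcomp Require Import zify.
From Stdlib Require Import ClassicalEpsilon.
Set Implicit Arguments. Unset Strict Implicit. Unset Printing Implicit Defensive.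

Definition glue (Ls : seq (seq (option nat))) (c : seq nat) : seq nat :=
  flatten [seq csub p.1 p.2 | p <- zip Ls c].

Definition okl (k : nat) (o : option nat) : bool :=
  if o is Some j then j < k else true.

Definition lineok (k : nat) (L : seq (option nat)) : bool :=
  (None \in L) && all (okl k) L.

Definition HJ (k : nat) : Prop := forall C : finType, exists N,
  forall chi : seq nat -> C, exists L, [/\ size L = N, lineok k L &
    forall a b, a < k -> b < k -> chi (csub L a) = chi (csub L b)].

Definition InvP (C : Type) (k : nat) (chi : seq nat -> C) Ls : Prop :=
  forall i c a, i < size Ls -> size c = size Ls -> all (fun x => x < k.+1) c ->
    a < k -> chi (glue Ls (set_nth 0 c i a)) = chi (glue Ls (set_nth 0 c i 0)).

Definition Build k r : Prop := forall C : finType, exists M,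
  forall chi : seq nat -> C, exists Ls, [/\ size Ls = r, all (lineok k) Ls,
    sumn (map size Ls) = M & InvP k chi Ls].

Lemma glue_cons L Ls x c : glue (L :: Ls) (x :: c) = csub L x ++ glue Ls c.
Proof. by []. Qed.

Lemma size_csub (T : Type) (L : seq (option T)) a : size (csub L a) = size L.
Proof. by rewrite size_map. Qed.

Lemma glue_size Ls c : size c = size Ls -> size (glue Ls c) = sumn (map size Ls).
Proof.
elim: Ls c => [|L Ls IH] [|x c] //= [] /IH.
by rewrite size_cat size_csub => ->.
Qed.

Lemma glue_letters k Ls c : all (lineok k) Ls -> all (fun x => x < k.+1) c ->
  all (fun x => x < k.+1) (glue Ls c).
Proof.
elim: Ls c => [|L Ls IH] [|x c] //= /andP[/andP[_ HL] HLs] /andP[Hx Hc].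
rewrite all_cat IH // andbT /csub all_map.
apply/allP => o Ho /=; move/allP: HL => /(_ o Ho); case: o {Ho} => //= j; lia.
Qed.

Lemma chain k Ls : forall (C : Type) (chi : seq nat -> C) c d, InvP k chi Ls ->
  size c = size Ls -> size d = size Ls ->
  all (fun x => x < k.+1) c -> all (fun x => x < k.+1) d ->
  (forall m, nth 0 c m = nth 0 d m \/ (nth 0 c m < k /\ nth 0 d m < k)) ->
  chi (glue Ls c) = chi (glue Ls d).
Proof.
elim: Ls => [|L Ls IH] C chi [|c0 c] [|d0 d] //= HI [Hc] [Hd]
  /andP[Hc0 Hca] /andP[Hd0 Hda] Hm.
rewrite !glue_cons.
have -> : chi (csub L c0 ++ glue Ls c) = chi (csub L c0 ++ glue Ls d).
  apply: (IH _ (fun w => chi (csub L c0 ++ w))) => //; last by move=> m; exact: (Hm m.+1).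
  move=> i c' a Hi Hc' Hca' Ha.
  have := HI i.+1 (c0 :: c') a; rewrite /= Hc' Hc0 Hca'; move/(_ Hi erefl erefl Ha).
  by rewrite !glue_cons.
have HI0 : forall a, a < k -> chi (csub L a ++ glue Ls d) = chi (csub L 0 ++ glue Ls d).
  move=> a Ha; have := HI 0 (c0 :: d) a; rewrite /= Hd Hc0 Hda.
  by move/(_ erefl erefl erefl Ha); rewrite !glue_cons.
case: (Hm 0) => /= [-> //|[H1 H2]].
by rewrite HI0 // HI0.
Qed.

Lemma build0 k : Build k 0.
Proof. move=> C; exists 0 => chi; exists [::]; split => // i c a; by []. Qed.

Lemma buildS k r : HJ k -> Build k r -> Build k r.+1.
Proof.
move=> HJk HB C.
have [Mr HMr] := HB ({ffun 'I_k.+1 -> C} : finType).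
have [N1 HN1] := HJk ({ffun Mr.-tuple 'I_k.+1 -> C} : finType).
exists (N1 + Mr) => chi.
have [L1 [sL1 okL1 HL1]] :=
  HN1 (fun v => [ffun y : Mr.-tuple 'I_k.+1 => chi (v ++ map val y)]).
have [Ls [sLs okLs sumLs HLs]] :=
  HMr (fun y => [ffun a : 'I_k.+1 => chi (csub L1 a ++ y)]).
exists (L1 :: Ls); split => //=; first by rewrite sLs.
  by rewrite okL1 okLs.
  by rewrite sL1 sumLs.
move=> [|i] [|c0 c] a //= Hi [Hc] /andP[Hc0 Hca] Ha; rewrite !glue_cons.
  set g := glue Ls c.
  have Hg : size g = Mr by rewrite /g glue_size // sLs.
  have Hgl : all (fun x => x < k.+1) g by apply: glue_letters.
  have Hy : size (map (@inord k) g) == Mr by rewrite size_map Hg.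
  have Hyv : map val (Tuple Hy) = g.
    rewrite /= -map_comp -[RHS]map_id; apply/eq_in_map => x Hx /=.
    by rewrite inordK //; move/allP: Hgl => /(_ x Hx).
  have := HL1 a 0 Ha (leq_ltn_trans (leq0n a) Ha).
  move=> H; have := congr1 (fun f : {ffun Mr.-tuple 'I_k.+1 -> C} => f (Tuple Hy)) H.
  by rewrite /= !ffunE Hyv.
have := HLs i c a Hi Hc Hca Ha.
move=> H; have := congr1 (fun f : {ffun 'I_k.+1 -> C} => f (inord c0)) H.
by rewrite /= !ffunE inordK.
Qed.

Lemma build_all k : HJ k -> forall r, Build k r.
Proof. move=> H; elim=> [|r IH]; [exact: build0 | exact: buildS]. Qed.

Definition vflat (Ls : seq (seq (option nat))) (d : seq (option nat)) :=
  flatten [seq vsub p.1 p.2 | p <- zip Ls d].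

Lemma size_vsub (T : Type) (L : seq (option T)) o : size (vsub L o) = size L.
Proof. by rewrite size_map. Qed.

Lemma vflat_size Ls d : size d = size Ls -> size (vflat Ls d) = sumn (map size Ls).
Proof.
elim: Ls d => [|L Ls IH] [|x d] //= [] /IH.
by rewrite /vflat /= size_cat size_vsub => ->.
Qed.

Lemma csub_vsub (T : Type) (L : seq (option T)) o a :
  csub (vsub L o) a = csub L (odflt a o).
Proof. by rewrite /csub /vsub -map_comp; apply: eq_map => [[b|]] //=; case: o. Qed.

Lemma csub_cat (T : Type) (x y : seq (option T)) a : csub (x ++ y) a = csub x a ++ csub y a.
Proof. exact: map_cat. Qed.

Lemma csub_vflat Ls d a : csub (vflat Ls d) a = glue Ls (map (odflt a) d).
Proof.
elim: Ls d => [|L Ls IH] [|x d] //=.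
have -> : vflat (L :: Ls) (x :: d) = vsub L x ++ vflat Ls d by [].
by rewrite csub_cat csub_vsub IH.
Qed.

Lemma vflat_letters k Ls d : all (lineok k) Ls -> all (okl k.+1) d ->
  all (okl k.+1) (vflat Ls d).
Proof.
elim: Ls d => [|L Ls IH] [|x d] //= /andP[/andP[_ HL] HLs] /andP[Hx Hd].
have -> : vflat (L :: Ls) (x :: d) = vsub L x ++ vflat Ls d by [].
rewrite all_cat; apply/andP; split; last exact: IH.
rewrite /vsub all_map; apply/allP => o Ho /=.
move/allP: HL => /(_ o Ho); case: o {Ho} => [j|] /=; first lia.
by case: x Hx.
Qed.

Lemma vsub_None (T : Type) (L : seq (option T)) : vsub L None = L.
Proof. by rewrite /vsub -[RHS]map_id; apply: eq_map => [[]]. Qed.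

Lemma HJ0 : HJ 0.
Proof.
move=> C; exists 1 => chi; exists [:: None]; split => //.
Qed.

Lemma HJS k : HJ k -> HJ k.+1.
Proof.
move=> HJk C.
have [M HM] := build_all HJk #|C| C.
exists M => chi.
have [Ls [sLs okLs sumLs HI]] := HM chi.
set r := #|C| in sLs.
pose pt (i : nat) := mkseq (fun m => if m < i then k else 0) r.
pose f (i : 'I_r.+1) := chi (glue Ls (pt i)).
have : ~~ injectiveb f.
  apply/negP => /injectiveP Hinj; have := leq_card f Hinj; rewrite card_ord /r; lia.
case/injectivePn => i0 [j0 Hij Hf].
have [i [j [Hlt Hjr Hfij]]] : exists i j, [/\ i < j, j <= r & chi (glue Ls (pt i)) = chi (glue Ls (pt j))].
  case: (ltngtP i0 j0) => H.
  - by exists i0, j0; split => //; rewrite -ltnS.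
  - by exists j0, i0; split => //; rewrite -ltnS.
  - by move: Hij; rewrite (val_inj H) eqxx.
pose dv := mkseq (fun m => if m < i then Some k else if m < j then None else Some 0) r.
have sdv : size dv = size Ls by rewrite size_mkseq sLs.
exists (vflat Ls dv); split.
- by rewrite vflat_size.
- apply/andP; split; last first.
    apply: vflat_letters => //; rewrite /dv /mkseq all_map; apply/allP => m _ /=.
    by rewrite /okl; case: ifP => H1; last case: ifP => H2.
  apply/flatten_mapP; exists (nth [::] Ls i, None).
    have <- : nth ([::], None) (zip Ls dv) i = (nth [::] Ls i, None).
      rewrite nth_zip // /dv (nth_mkseq _ _ (_ : i < r)); last lia.
      by rewrite ltnn Hlt.
    by apply: mem_nth; rewrite size_zip sdv minnn sLs; lia.
  rewrite /= vsub_None; have : nth [::] Ls i \in Ls by apply: mem_nth; rewrite sLs; lia.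
  by move/(allP okLs) => /andP[].
- have key : forall a, a < k.+1 -> chi (csub (vflat Ls dv) a) = chi (glue Ls (pt j)).
    move=> a Ha; rewrite csub_vflat.
    have -> : map (odflt a) dv = mkseq (fun m => if m < i then k else if m < j then a else 0) r.
      rewrite /dv /mkseq -map_comp; apply: eq_map => m /=.
      by case: ifP => //; case: ifP.
    case: (ltngtP a k) => [Hak|Hka|->]; last first.
      congr (chi (glue Ls _)); apply: eq_mkseq => m /=.
      by case: ltnP => H1; case: ltnP => H2 //=; lia.
      lia.
    rewrite -Hfij; eapply chain; first exact: HI.
    + by rewrite size_mkseq.
    + by rewrite size_mkseq.
    + rewrite /mkseq all_map; apply/allP => m _ /=; case: (m < i) => //; case: (m < j) => //.
    + rewrite /pt /mkseq all_map; apply/allP => m _ /=; case: (m < i) => //.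
    + move=> m; case: (ltnP m r) => Hm.
        rewrite !nth_mkseq //=.
        by case: ltnP => H1; case: ltnP => H2 //=; try lia; right; lia.
      by rewrite !nth_default ?size_mkseq //; left.
  by move=> a b Ha Hb; rewrite !key.
Qed.

Lemma HJall k : HJ k.
Proof. elim: k => [|k IH]; [exact: HJ0 | exact: HJS]. Qed.

Definition dec (P : Prop) : bool := if excluded_middle_informative P then true else false.
Lemma decP (P : Prop) : dec P = true <-> P.
Proof. by rewrite /dec; case: excluded_middle_informative. Qed.

Lemma sorted_rcons_inv l x : sorted ltn (rcons l x) -> sorted ltn l /\ all (fun y => y < x) l.
Proof.
elim: l => [|y l IH] //= H.
move: H; rewrite (path_sortedE ltn_trans) all_rcons => /andP[/andP[Hyx Hy] Hs].
have [H1 H2] := IH Hs; split; last by rewrite Hyx.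
by rewrite (path_sortedE ltn_trans) Hy H1.
Qed.

Lemma sorted_catB l1 l2 B : sorted ltn l1 -> sorted ltn l2 ->
  all (fun y => y < B) l1 -> all (fun y => B <= y) l2 -> sorted ltn (l1 ++ l2).
Proof.
elim: l1 => [|y l IH] //= H1 H2 /andP[HyB HlB] Hl2.
move: H1; rewrite !(path_sortedE ltn_trans) all_cat => /andP[Hy Hs].
rewrite Hy IH //= andbT; apply/allP => z Hz; move/allP: Hl2 => /(_ z Hz); lia.
Qed.

Lemma csub_Some (A : Type) (p : seq A) a : csub (map Some p) a = p.
Proof. by rewrite /csub -map_comp map_id. Qed.

Section Main.
Variables (A : finType) (a0 : A) (E : seq A -> Prop) (s : nat -> seq (option A)).

Definition en j := nth a0 (enum A) j.

Lemma en_surj al : exists2 j, j < #|A| & en j = al.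
Proof.
exists (index al (enum A)); first by rewrite cardE index_mem mem_enum.
by rewrite /en nth_index // mem_enum.
Qed.

Definition SC B p := exists l a, [/\ sorted ltn l, all (fun x => x < B) l,
  size a = size l & p = flatten [seq csub (s q.1) q.2 | q <- zip l a]].

Definition tw B (L : seq (option nat)) :=
  flatten [seq vsub (s q.1) q.2 | q <- zip (iota B (size L)) (map (omap en) L)].
Definition uw B (v : seq nat) :=
  flatten [seq csub (s q.1) (en q.2) | q <- zip (iota B (size v)) v].

Lemma csub_tw B L j : csub (tw B L) (en j) = uw B (csub L j).
Proof.
elim: L B => [|o L IH] B //.
have -> : tw B (o :: L) = vsub (s B) (omap en o) ++ tw B.+1 L by [].
have -> : csub (o :: L) j = odflt j o :: csub L j by case: o.
have -> : uw B (odflt j o :: csub L j) = csub (s B) (en (odflt j o)) ++ uw B.+1 (csub L j) by [].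
by rewrite csub_cat csub_vsub IH; case: o.
Qed.

Lemma vspan_tw B L : None \in L ->
  vspan s (fun n => (B <= n) && (n < B + size L)) (tw B L).
Proof.
move=> HN; exists (iota B (size L)), (map (omap en) L); split => //.
split.
- by case: L HN.
- by rewrite size_map size_iota.
- exact: iota_ltn_sorted.
- by apply/allP => x; rewrite mem_iota.
- by apply/mapP; exists None.
Qed.

Lemma SC_mono B B' p : B <= B' -> SC B p -> SC B' p.
Proof.
move=> HB [l [a [H1 H2 H3 H4]]]; exists l, a; split => //.
apply/allP => x /(allP H2); lia.
Qed.

Lemma csub_flat_v l a al : csub (flatten [seq vsub (s q.1) q.2 | q <- zip l a]) al =
  flatten [seq csub (s q.1) q.2 | q <- zip l (map (odflt al) a)].
Proof.
elim: l a => [|x l IH] [|c a] //=.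
by rewrite csub_cat csub_vsub IH.
Qed.

Lemma Some_flat l a : map Some (flatten [seq csub (s q.1) q.2 | q <- zip l a]) =
  flatten [seq vsub (s q.1) q.2 | q <- zip l (map Some a)].
Proof.
elim: l a => [|x l IH] [|c a] //=.
rewrite map_cat IH; congr (_ ++ _).
by rewrite /csub /vsub -map_comp; apply: eq_map => [[]].
Qed.

Fixpoint presn (ts : seq (seq (option A))) (n : nat) : seq (seq A) :=
  match n with
  | 0 => [:: [::]]
  | n'.+1 => presn ts n' ++ [seq p ++ csub (nth [::] ts n') al | p <- presn ts n', al <- enum A]
  end.

Lemma presn_sub ts m n : m <= n -> {subset presn ts m <= presn ts n}.
Proof.
elim: n => [|n IH] Hmn p Hp.
  by move: Hmn Hp; rewrite leqn0 => /eqP ->.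
have [Hlt|Hge] := ltnP m n.+1.
  by rewrite /= mem_cat IH.
have Hm : m = n.+1 by lia.
by move: Hp; rewrite Hm.
Qed.

Lemma presn_nil ts n : [::] \in presn ts n.
Proof. by apply: (presn_sub (leq0n n)); rewrite /= inE. Qed.

Lemma pres_complete ts l : forall a n, sorted ltn l -> all (fun x => x < n) l ->
  size a = size l ->
  flatten [seq csub (nth [::] ts q.1) q.2 | q <- zip l a] \in presn ts n.
Proof.
elim/last_ind: l => [|l x IH] a n Hs Hall Hsz.
  by case: a Hsz => //= _; apply: presn_nil.
case/lastP: a Hsz => [|a al]; first by rewrite size_rcons.
rewrite !size_rcons => -[Hsz].
have [Hs' Hx] := sorted_rcons_inv Hs.
move: Hall; rewrite all_rcons => /andP[Hxn _].
rewrite zip_rcons // map_rcons flatten_rcons.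
apply: (presn_sub Hxn); rewrite /= mem_cat; apply/orP; right.
apply: allpairs_f; last by rewrite mem_enum.
exact: IH.
Qed.

Lemma presn_eq ts ts' n : (forall i, i < n -> nth [::] ts i = nth [::] ts' i) ->
  presn ts n = presn ts' n.
Proof.
elim: n => [|n IH] H //=.
rewrite IH; last by move=> i Hi; apply: H; lia.
by rewrite H.
Qed.

Definition Inv (st : seq nat * seq (seq (option A))) : Prop :=
  [/\ size st.1 = (size st.2).+1, nth 0 st.1 0 = 0,
   forall i, i < size st.2 -> nth 0 st.1 i < nth 0 st.1 i.+1 /\
     vspan s (fun x => (nth 0 st.1 i <= x) && (x < nth 0 st.1 i.+1)) (nth [::] st.2 i)
 & forall m, m < size st.2 -> forall p, p \in presn st.2 m -> forall al,
     ~ E (p ++ csub (nth [::] st.2 m) al)].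

Lemma pres_SC bs ts : Inv (bs, ts) -> forall m, m <= size ts ->
  forall p, p \in presn ts m -> SC (nth 0 bs m) p.
Proof.
move=> [_ _ H2 _]; simpl in H2; elim=> [|m IH] Hm p /=.
  rewrite inE => /eqP ->; by exists [::], [::].
have [Hlt [l2 [a2 [[_ Hsz2 Hs2 Hall2 _] Heq2]]]] := H2 m Hm.
rewrite mem_cat => /orP[Hp|].
  by apply: SC_mono (ltnW Hlt) _; apply: IH => //; lia.
case/allpairsP => [[p' al] [/= Hp' _ ->]].
have [l1 [a1 [Hs1 Hall1 Hsz1 ->]]] := IH (ltnW Hm) p' Hp'.
exists (l1 ++ l2), (a1 ++ map (odflt al) a2); split.
- apply: sorted_catB Hs1 Hs2 Hall1 _.
  by apply/allP => x /(allP Hall2) /andP[].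
- rewrite all_cat; apply/andP; split.
    by apply/allP => x /(allP Hall1); lia.
  by apply/allP => x /(allP Hall2) /andP[].
- by rewrite !size_cat size_map Hsz1 Hsz2.
- by rewrite zip_cat // map_cat flatten_cat Heq2 csub_flat_v.
Qed.

Hypothesis Hno : ~ exists m w, vspan s (fun n => n <= m) w /\ forall a, E (csub w a).

Lemma step bs ts : Inv (bs, ts) -> exists b t, Inv (rcons bs b, rcons ts t).
Proof.
move=> HI; have [Hs1 H0 H2 H3] := HI.
set n := size ts; set B := nth 0 bs n; set P := presn ts n.
have [N HN] := HJall #|A| ({ffun 'I_(size P) -> bool} : finType).
have [L [sL /andP[HNL _] HL]] :=
  HN (fun v => [ffun j : 'I_(size P) => dec (E (nth [::] P j ++ uw B v))]).
have key : forall p, p \in P -> forall al, ~ E (p ++ csub (tw B L) al).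
  move=> p Hp al HE.
  have Hall : forall be, E (p ++ csub (tw B L) be).
    move=> be; have [j1 Hj1 <-] := en_surj be; have [j0 Hj0 Hal] := en_surj al.
    have := HL j1 j0 Hj1 Hj0 => H.
    have Hidx : index p P < size P by rewrite index_mem.
    have := congr1 (fun f : {ffun 'I_(size P) -> bool} => f (Ordinal Hidx)) H.
    rewrite !ffunE /= nth_index // => Heq.
    rewrite csub_tw; apply/decP; rewrite Heq; apply/decP.
    by rewrite -csub_tw Hal.
  have [l1 [a1 [Hs1' Hall1 Hsz1 Hp1]]] := pres_SC HI (leqnn n) Hp.
  apply: Hno; exists (B + size L).-1, (map Some p ++ tw B L); split; last first.
    by move=> be; rewrite csub_cat csub_Some.
  have HLpos : 0 < size L by case: (L) HNL.
  exists (l1 ++ iota B (size L)), (map Some a1 ++ map (omap en) L); split; first split.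
  - by apply/negP => /eqP/(congr1 size); rewrite size_cat size_iota /=; lia.
  - by rewrite !size_cat !size_map size_iota Hsz1.
  - apply: sorted_catB Hs1' (iota_ltn_sorted _ _) Hall1 _.
    by apply/allP => x; rewrite mem_iota => /andP[].
  - rewrite all_cat; apply/andP; split.
      by apply/allP => x /(allP Hall1); lia.
    by apply/allP => x; rewrite mem_iota; lia.
  - by rewrite mem_cat; apply/orP; right; apply/mapP; exists None.
  - rewrite zip_cat ?size_map // map_cat flatten_cat -Some_flat -Hp1.
    by rewrite /tw.
exists (B + size L), (tw B L).
have HLpos : 0 < size L by case: (L) HNL.
have Hbs : n < size bs by rewrite Hs1.
split => /=.
- by rewrite !size_rcons Hs1.
- by rewrite nth_rcons ifT // (leq_ltn_trans (leq0n n) Hbs).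
- move=> i; rewrite size_rcons ltnS leq_eqVlt => /orP[/eqP ->|Hi].
    rewrite !nth_rcons -/n ltnn eqxx Hs1 ltnSn; rewrite ltnn eqxx.
    by rewrite -/B; split; [lia | exact: vspan_tw].
  rewrite !nth_rcons Hi Hs1 (ltn_trans Hi (ltnSn _)) ltnS Hi.
  exact: H2.
- move=> m; rewrite size_rcons ltnS leq_eqVlt => /orP[/eqP ->|Hm] p.
    rewrite (presn_eq (ts' := ts)); last by move=> i Hi; rewrite nth_rcons Hi.
    by rewrite nth_rcons ltnn eqxx; apply: key.
  rewrite (presn_eq (ts' := ts)); last by move=> i Hi; rewrite nth_rcons (ltn_trans Hi Hm).
  by rewrite nth_rcons Hm; apply: H3.
Qed.


Lemma flat_congr (f g : nat -> seq (option A)) l a :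
  (forall i, i \in l -> f i = g i) ->
  flatten [seq csub (f q.1) q.2 | q <- zip l a] = flatten [seq csub (g q.1) q.2 | q <- zip l a].
Proof.
elim: l a => [|x l IH] [|c a] //= H.
rewrite H; last by rewrite inE eqxx.
by rewrite IH // => i Hi; apply: H; rewrite inE Hi orbT.
Qed.

Lemma no_large : ~ large E s.
Proof.
move=> HLg.
have Hstep : forall st, exists st', Inv st -> Inv st' /\ exists b t, st' = (rcons st.1 b, rcons st.2 t).
  move=> [bs ts]; case: (classic (Inv (bs, ts))) => HI; last by exists (bs, ts).
  have [b [t Ht]] := step HI; exists (rcons bs b, rcons ts t) => _; split => //.
  by exists b, t.
pose nxt st := proj1_sig (constructive_indefinite_description _ (Hstep st)).
have Hnxt : forall st, Inv st -> Inv (nxt st) /\ exists b t, nxt st = (rcons st.1 b, rcons st.2 t).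
  by move=> st; rewrite /nxt; case: constructive_indefinite_description => /= x Hx /Hx.
pose S n := iter n nxt ([:: 0], [::]).
have HS : forall n, Inv (S n) /\ size (S n).2 = n.
  elim=> [|n [IH1 IH2]].
    split => //; split => //= m; by [].
  have [H1 [b [t Ht]]] := Hnxt _ IH1.
  by rewrite /S iterS -/(S n) Ht size_rcons IH2; split => //; rewrite -Ht.
have Hpre : forall n d, (forall i, i < n -> nth [::] (S (n + d)).2 i = nth [::] (S n).2 i) /\ (forall i, i <= n -> nth 0 (S (n + d)).1 i = nth 0 (S n).1 i).
  move=> n; elim=> [|d [IH1 IH2]]; first by rewrite addn0.
  have [[Hs1 _ _ _] Hs2] := HS (n + d).
  have [_ [b [t Ht]]] := Hnxt _ (proj1 (HS (n + d))).
  rewrite /S addnS iterS -/(S (n + d)) Ht /=; split => i Hi.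
    by rewrite nth_rcons Hs2 (leq_trans Hi (leq_addr _ _)) IH1.
  by rewrite nth_rcons Hs1 Hs2 ltnS (leq_trans Hi (leq_addr _ _)) IH2.
pose t i := nth [::] (S i.+1).2 i.
pose b i := nth 0 (S i).1 i.
have Ht : forall i n, i < n -> t i = nth [::] (S n).2 i.
  move=> i n Hin; rewrite /t; have -> : n = i.+1 + (n - i.+1) by lia.
  by rewrite (proj1 (Hpre _ _)).
have Hext : extracted s t.
  move=> l; exists b; split => //.
    move=> i _; have [[_ _ H2 _] Hsz] := HS i.+1.
    have := H2 i; rewrite Hsz ltnSn => /(_ erefl) [Hlt _].
    have Eb : nth 0 (S i.+1).1 i = b i by rewrite /b -addn1 (proj2 (Hpre i 1)).
    by rewrite -Eb.
  move=> i _; have [[_ _ H2 _] Hsz] := HS i.+1.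
  have := H2 i; rewrite Hsz ltnSn => /(_ erefl) [_ Hv].
  have Eb : nth 0 (S i.+1).1 i = b i by rewrite /b -addn1 (proj2 (Hpre i 1)).
  by rewrite -Eb.
have [u [HEu [l [a [Hl Hsz Hs _ Hu]]]]] := HLg t Hext.
case/lastP: l Hl Hsz Hs Hu => [//|l x] _.
case/lastP: a => [|a al]; first by rewrite size_rcons.
rewrite !size_rcons => -[Hsz] Hs.
have [Hs' Hx] := sorted_rcons_inv Hs.
rewrite zip_rcons // map_rcons flatten_rcons => Hu.
have [[_ _ _ H3] Hsz'] := HS x.+1.
apply: (H3 x _ (flatten [seq csub (nth [::] (S x.+1).2 q.1) q.2 | q <- zip l a]) _ al).
    by rewrite Hsz'.
  by apply: pres_complete.
rewrite -(flat_congr (f := t)); last first.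
  by move=> i Hi; apply: Ht; move/allP: Hx => /(_ i Hi); lia.
by rewrite -Ht // -Hu.
Qed.

End Main.

Theorem fact2p7 (A : finType) (hA : 0 < #|A|) (E : seq A -> Prop)
  (s : nat -> seq (option A)) (hs : forall n, is_vword (s n)) :
  large E s ->
  exists (m : nat) (w : seq (option A)),
    vspan s (fun n => n <= m) w /\ (forall a : A, E (csub w a)).
Proof.
move=> HL; case: (classic (exists (m : nat) (w : seq (option A)),
    vspan s (fun n => n <= m) w /\ (forall a : A, E (csub w a)))) => // Hno.
have /card_gt0P [a0 _] := hA.
by case: (no_large a0 Hno HL).
Qed.
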